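(* An element $\bar b\in\mathcal B$ satisfies $W\bar b+\tilde P\bar b\ni0$ in $C(\mathcal X)$ if and only if $B^{-1}(\bar b)$ is supported on $\arg\min_{\mathcal X}V$.
   Context: $(\mathcal X,\mathsf d)$ compact metric space; $\varepsilon>0$; $c\in C(\mathcal X\times\mathcal X)$ symmetric, nonnegative, with $k_c:=\exp(-c/\varepsilon)$ a positive definite universal kernel, RKHS $\mathcal H_c$, Riesz map $H_c$ ($H_c[\sigma](y)=\int k_c(x,y)d\sigma(x)$ on measures; $H_c^{-1}$ on $H_c[\mathcal M(\mathcal X)]$ returns the measure); $V\in C(\mathcal X)$. $\mathcal B:=H_c[\mathcal M_+(\mathcal X)]\cap\{\|b\|_{\mathcal H_c}=1\}$; $B^{-1}(b):=b\,H_c^{-1}[b]$ (a probability measure, inverse of the embedding $B(\mu)=\exp(-f_\mu/\varepsilon)$, with $b>0$ on $\mathcal X$). For $b\in H_c[\mathcal M(\mathcal X)]$: $Vb$ pointwise product, $V^*b:=H_c[VH_c^{-1}[b]]$, $W:=\frac2\varepsilon(V-V^* )$; for $b\in H_c[\mathcal M_+(\mathcal X)]$: $\tilde Pb:=\{p\in C(\mathcal X):p\le0,\ p=0\text{ on }\operatorname{supp}H_c^{-1}[b]\}$. *)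

(* Defs.v *)
From HB Require Import structures.
From mathcomp Require Import all_boot all_order all_algebra.
From mathcomp Require Import all_classical all_reals all_analysis.
Set Implicit Arguments.
Unset Strict Implicit.
Unset Printing Implicit Defensive.
Import Order.TTheory GRing.Theory Num.Theory.
Import numFieldNormedType.Exports.
Local Open Scope classical_set_scope.
Local Open Scope ring_scope.

Definition borel (T : ptopologicalType) := g_sigma_algebraType (@open T).

Section defs.
Context {R : realType} {T : pseudoPMetricType R}.

Definition kc (eps : R) (c : T -> T -> R) (x y : T) : R := expR (- c x y / eps).

Definition pos_def_kernel (k : T -> T -> R) : Prop :=
  forall s : seq (R * T),
    0 <= \sum_(p <- s) \sum_(q <- s) p.1 * q.1 * k p.2 q.2.

Definition universal_kernel (k : T -> T -> R) : Prop :=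
  forall f : T -> R, continuous f -> forall e : R, 0 < e ->
    exists s : seq (R * T),
      forall y, `| f y - \sum_(p <- s) p.1 * k p.2 y | < e.

Definition Hc (eps : R) (c : T -> T -> R)
  (mu : {measure set (borel T) -> \bar R}) (y : T) : R :=
  fine (\int[mu]_x (kc eps c x y)%:E).

(* squared RKHS norm of H_c[mu]:  ||H_c mu||^2 = int int k dmu dmu *)
Definition Hc_sqnorm (eps : R) (c : T -> T -> R)
  (mu : {measure set (borel T) -> \bar R}) : \bar R :=
  \int[mu]_y (Hc eps c mu y)%:E.

(* V^* b = H_c[V H_c^{-1}[b]], with mu = H_c^{-1}[b] *)
Definition Vstar (eps : R) (c : T -> T -> R) (V : T -> R)
  (mu : {measure set (borel T) -> \bar R}) (y : T) : R :=
  fine (\int[mu]_x (kc eps c x y * V x)%:E).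

(* W b = (2/eps)(V b - V^* b), with mu = H_c^{-1}[b] *)
Definition Wop (eps : R) (c : T -> T -> R) (V : T -> R)
  (mu : {measure set (borel T) -> \bar R}) (b : T -> R) (y : T) : R :=
  2 / eps * (V y * b y - Vstar eps c V mu y).

Definition msupp (mu : {measure set (borel T) -> \bar R}) : set T :=
  [set x | forall U : set T, open U -> U x -> (0 < mu U)%E].

(* \tilde P b, with mu = H_c^{-1}[b] *)
Definition Ptilde (mu : {measure set (borel T) -> \bar R}) : set (T -> R) :=
  [set p : T -> R | continuous p /\ (forall x, p x <= 0 :> R) /\
           (forall x, msupp mu x -> p x = 0)].

(* B^{-1}(b) = b H_c^{-1}[b], the measure A |-> int_A b dmu *)
Definition Binv (mu : {measure set (borel T) -> \bar R}) (b : T -> R)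
  (A : set T) : \bar R :=
  \int[mu]_(x in (A : set (borel T))) (b x)%:E.

Definition argmin (V : T -> R) : set T := [set x | forall y, V x <= V y].

End defs.

(* Main.v *)
Require Import Defs.
From HB Require Import structures.
From mathcomp Require Import ring lra.
From mathcomp Require Import all_boot all_order all_algebra.
From mathcomp Require Import all_classical all_reals all_analysis.
From mathcomp Require Import measurable_realfun.
Import Order.TTheory GRing.Theory Num.Theory.
Import numFieldNormedType.Exports.
Local Open Scope classical_set_scope.
Local Open Scope ring_scope.

Lemma open_meas (R : realType) (T : pseudoPMetricType R) (A : set (borel T)) :
  open (A : set T) -> measurable A.
Proof. by move=> oA; apply: sub_sigma_algebra. Qed.

Lemma cont_meas {R : realType} {T : pseudoPMetricType R} (f : T -> R) :
  continuous f -> measurable_fun (setT : set (borel T)) f.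
Proof.
move=> /continuousP cf; apply: (measurability _ (measurable_realfun.RGenOpens.measurableE R)).
move=> _ [_ [a [b ->]] <-]; rewrite setTI; apply: open_meas.
exact/cf/interval_open.
Qed.

Lemma cont_bound {R : realType} {T : pseudoPMetricType R} (f : T -> R) :
  compact [set: T] -> continuous f -> exists M : R, forall x, `|f x| <= M.
Proof.
move=> hc cf.
have [y _ hy] := @compact_EVT_max T R (fun x => `|f x|) setT
  (ex_intro _ point I) hc (continuous_subspaceT (fun x => continuous_comp (cf x) (@norm_continuous _ R^o _))).
by exists `|f y| => x; apply: hy; rewrite inE.
Qed.

Lemma cont_int {R : realType} {T : pseudoPMetricType R}
  (mu : {finite_measure set (borel T) -> \bar R}) (f : T -> R) :
  compact [set: T] -> continuous f -> mu.-integrable setT (EFin \o f).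
Proof.
move=> hc cf; apply: measurable_bounded_integrable => //.
- by rewrite ltey_eq fin_num_measure.
- exact: cont_meas.
- have [M hM] := cont_bound f hc cf.
  exists M; split; rewrite ?num_real // => ? ? ? _; apply: le_trans (hM _) _.
  exact: ltW.
Qed.

Lemma tube {R : realType} {T : pseudoPMetricType R} (g : T -> T -> R) :
  compact [set: T] -> continuous (fun p : T * T => g p.1 p.2) ->
  forall y0 e, 0 < e -> \forall y \near y0, forall x, `|g x y - g x y0| < e.
Proof.
move=> hc cg y0 e e0.
suff H : \forall y \near y0, [set: T] `<=` (fun x => `|g x y - g x y0| < e).
  by apply: filterS H => y Hy x; exact: Hy.
apply: ((iffLR (compact_near_coveringP _)) hc T (nbhs y0)
  (fun y x => `|g x y - g x y0| < e)) => // x _.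
have := cg (x, y0); move/cvgrPdist_lt => /(_ (e/2)) H.
have {H} := H (divr_gt0 e0 (ltr0Sn R 1)).
case=> [[A B] /= [nA nB] sAB].
exists (A, B) => //= -[x' y] [/= Ax' By].
have h1 := sAB (x', y) (conj Ax' By).
have h2 := sAB (x', y0) (conj Ax' (nbhs_singleton nB)).
rewrite /= in h1 h2.
rewrite (_ : g x' y - g x' y0 = (g x y0 - g x' y0) - (g x y0 - g x' y)); last by ring.
apply: le_lt_trans (ler_normB _ _) _.
by rewrite [e]splitr ltrD.
Qed.

Lemma cont_sec {R : realType} {T : pseudoPMetricType R} (g : T -> T -> R) :
  continuous (fun p : T * T => g p.1 p.2) -> forall y, continuous (g^~ y).
Proof.
move=> cg y x.
have h : (fun x' : T => (x', y)) x' @[x' --> x] --> (x, y).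
  by apply: cvg_pair; [exact: cvg_id | exact: cvg_cst].
exact: (continuous_comp h (cg (x, y))).
Qed.

Lemma param_cont {R : realType} {T : pseudoPMetricType R}
  (mu : {finite_measure set (borel T) -> \bar R}) (g : T -> T -> R) :
  compact [set: T] -> continuous (fun p : T * T => g p.1 p.2) ->
  continuous (fun y => fine (\int[mu]_x (g x y)%:E)).
Proof.
move=> hc cg y0.
have cgy := cont_sec g cg.
apply/cvgrPdist_lt => e e0.
set r := fine (mu setT).
have r0 : 0 <= r by apply: fine_ge0; exact: measure_ge0.
have e'0 : 0 < e / (r + 1) by rewrite divr_gt0 // ltr_wpDl.
have := tube g hc cg y0 _ e'0.
apply: filterS => y Hy.
have i0 := cont_int mu _ hc (cgy y0); have i1 := cont_int mu _ hc (cgy y).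
rewrite -fineB; [|exact: integrable_fin_num|exact: integrable_fin_num].
rewrite -integralB_EFin //.
have cd : continuous (fun x => g x y0 - g x y).
  by move=> x; apply: continuousB; [exact: cgy|exact: cgy].
have id := cont_int mu _ hc cd.
under eq_integral do rewrite -EFinB.
rewrite -fine_abse; last exact: integrable_fin_num.
rewrite -lte_fin fineK; last by rewrite abse_fin_num; exact: integrable_fin_num.
apply: le_lt_trans (le_abse_integral _ _ _) _ => //.
  by apply/measurable_EFinP; exact: cont_meas.
apply: (@le_lt_trans _ _ (\int[mu]_x (e / (r + 1))%:E)%E).
  apply: ge0_le_integral => //.
  - by apply/measurable_EFinP; apply: measurableT_comp; [exact: normr_measurable|exact: cont_meas].
  - move=> x _; rewrite lee_fin -opprB normrN; exact: ltW.
have := @integral_cst _ _ _ mu setT measurableT (e/(r+1))%:E.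
rewrite /cst /= => ->.
have -> : mu setT = r%:E by rewrite fineK // fin_num_measure.
rewrite -EFinM lte_fin mulrAC ltr_pdivrMr; last by rewrite ltr_wpDl.
nra.
Qed.

Lemma int0_null {R : realType} {T : pseudoPMetricType R}
  (mu : {finite_measure set (borel T) -> \bar R}) (f : T -> R) (D A : set (borel T)) :
  measurable D -> measurable A -> A `<=` D -> measurable_fun D (EFin \o f) ->
  (forall x, D x -> 0 <= f x) -> (forall x, A x -> 0 < f x) ->
  (\int[mu]_(x in D) (f x)%:E = 0)%E -> mu A = 0%E.
Proof.
move=> mD mA AD mf f0 fA I0.
have : (\int[mu]_(x in D) `|(EFin \o f) x| = 0)%E.
  rewrite -I0; apply: eq_integral => x /[!inE] Dx /=.
  by rewrite ger0_norm // f0.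
move/(ae_eq_integral_abs mu mD mf) => [N [mN N0 sN]].
apply/eqP; rewrite -measure_le0 -N0; apply: le_measure; rewrite ?inE //.
move=> x Ax; apply: sN => /= h.
have := h (AD _ Ax) => /= -[] /eqP; rewrite (gt_eqF (fA _ Ax)).
by [].
Qed.

Theorem mainTheorem16 (R : realType) (T : pseudoPMetricType R)
  (eps : R) (c : T -> T -> R) (V : T -> R)
  (hT : hausdorff_space T) (hcpt : compact [set: T])
  (heps : 0 < eps)
  (hc : continuous (fun p : T * T => c p.1 p.2))
  (hcsym : forall x y, c x y = c y x) (hcge0 : forall x y, 0 <= c x y)
  (hpd : pos_def_kernel (kc eps c)) (huniv : universal_kernel (kc eps c))
  (hV : continuous V)
  (mu : {finite_measure set (borel T) -> \bar R}) (b : T -> R)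
  (hb : b = Hc eps c mu) (hnorm : Hc_sqnorm eps c mu = 1%E) :
  (exists p, Ptilde mu p /\ forall y, Wop eps c V mu b y + p y = 0)
  <-> Binv mu b (~` argmin V) = 0%E.
Proof.
have hk : continuous (fun p : T * T => kc eps c p.1 p.2).
  move=> q; rewrite /kc; apply: (@continuous_comp _ _ _ (fun p : T * T => - c p.1 p.2 / eps) expR); last exact: continuous_expR.
  by apply: cvgMl; apply: cvgN; exact: hc.
have hkV : continuous (fun p : T * T => kc eps c p.1 p.2 * V p.1).
  move=> q; apply: cvgM; first exact: hk.
  apply: (continuous_comp _ (hV _)); exact: cvg_fst.
have kpos : forall x y, 0 < kc eps c x y by move=> x y; exact: expR_gt0.
have bc : continuous b by rewrite hb; exact: (param_cont mu _ hcpt hk).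
have Vsc : continuous (Vstar eps c V mu).
  exact: (param_cont mu (fun x y => kc eps c x y * V x) hcpt hkV).
have [xm _ hxm] := @compact_EVT_min T R V setT (ex_intro _ point I) hcpt
  (continuous_subspaceT hV).
set m := V xm.
have hmin : forall y, m <= V y by move=> y; apply: hxm; rewrite inE.
have argE : ~` argmin V = [set x | m < V x].
  apply/seteqP; split => x /=.
  - move=> nx; rewrite ltNge; apply/negP => Vx; apply: nx => y.
    exact: le_trans Vx (hmin y).
  - by move=> mx ax; have := ax xm; rewrite leNgt mx.
have Uo : open [set x | m < V x].
  have -> : [set x | m < V x] = V @^-1` [set r | m < r] by [].
  by apply: (iffLR (continuousP V) hV); exact: open_gt.
have mU : measurable ([set x | m < V x] : set (borel T)) by exact: open_meas.
have bge0 : forall y, 0 <= b y.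
  move=> y; rewrite hb /Hc; apply: fine_ge0; apply: integral_ge0 => x _.
  by rewrite lee_fin ltW.
have mb : forall D : set (borel T), measurable_fun D (EFin \o b).
  by move=> D; apply/measurable_EFinP; apply: measurable_funTS; exact: cont_meas.
have bpos : forall y, 0 < b y.
  move=> y; rewrite lt_neqAle bge0 andbT; apply/eqP => b0.
  have iky := cont_int mu _ hcpt (cont_sec _ hk y).
  have I0 : (\int[mu]_x (kc eps c x y)%:E = 0)%E.
    rewrite -[LHS]fineK; last exact: integrable_fin_num iky.
    by rewrite -/(Hc eps c mu y) -hb -b0.
  have mu0 : mu setT = 0%E.
    apply: (int0_null mu (fun x => kc eps c x y) _ _ measurableT measurableT (fun x h => h)) => //.
    - by apply/measurable_EFinP; apply: cont_meas; exact: cont_sec.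
    - by move=> x _; exact: ltW.
  move: hnorm; rewrite /Hc_sqnorm null_set_integral //.
  - by case=> /eqP; rewrite eq_sym oner_eq0.
  - by rewrite -hb; exact: mb.
have keyB : Binv mu b (~` argmin V) = 0%E <-> mu [set x | m < V x] = 0%E.
  rewrite /Binv argE; split => [h|h].
  - exact: (int0_null mu b _ _ mU mU (fun x h => h) (mb _)
      (fun x _ => ltW (bpos x)) (fun x _ => bpos x) h).
  - exact: null_set_integral.
have e2 : 0 < 2 / eps by rewrite divr_gt0.
have ik : forall y, mu.-integrable setT (fun x => (kc eps c x y)%:E).
  by move=> y; exact: (cont_int mu _ hcpt (cont_sec _ hk y)).
have ikV : forall y, mu.-integrable setT (fun x => (kc eps c x y * V x)%:E).
  by move=> y; exact: (cont_int mu _ hcpt (cont_sec (fun x y => kc eps c x y * V x) hkV y)).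
split.
- move=> [p [[pc [ple _]] hW]]; apply/keyB.
  have W0 : 0 <= Wop eps c V mu b xm by have := hW xm; have := ple xm; lra.
  have W1 : 0 <= V xm * b xm - Vstar eps c V mu xm.
    by move: W0; rewrite /Wop pmulr_rge0.
  pose h x := kc eps c x xm * (V x - m).
  have hcont : continuous h.
    move=> x; apply: cvgM; first exact: cont_sec.
    by apply: cvgB; [exact: hV|exact: cvg_cst].
  have h0 : forall x, 0 <= h x.
    by move=> x; rewrite mulr_ge0 ?subr_ge0 // ltW.
  have hI : (\int[mu]_x (h x)%:E = (Vstar eps c V mu xm - m * b xm)%:E)%E.
    have im : mu.-integrable setT (EFin \o (fun x => m * kc eps c x xm)).
      apply: (cont_int mu _ hcpt) => x; apply: cvgMr; exact: cont_sec.
    rewrite (_ : (fun x => (h x)%:E) = (fun x => (kc eps c x xm * V x)%:E - (m * kc eps c x xm)%:E)%E); last first.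
      by apply/funext => x; rewrite -EFinB /h; congr EFin; ring.
    rewrite (integralB_EFin measurableT (ikV xm) im).
    rewrite [X in (_ - X)%E](_ : _ = (m%:E * \int[mu]_x (kc eps c x xm)%:E)%E); last first.
      under eq_integral do rewrite EFinM.
      exact: (integralZl measurableT (ik xm)).
    rewrite /Vstar hb /Hc.
    rewrite EFinB EFinM !fineK //; [exact: integrable_fin_num (ik xm)|exact: integrable_fin_num (ikV xm)].
  have I0 : (\int[mu]_x (h x)%:E = 0)%E.
    apply/eqP; rewrite eq_le integral_ge0 ?andbT; last by move=> x _; rewrite lee_fin.
    rewrite hI lee_fin; have W2 : 0 <= m * b xm - Vstar eps c V mu xm := W1; lra.
  apply: (int0_null mu h _ _ measurableT mU (fun x _ => I)) => //.
  - by apply/measurable_EFinP; exact: cont_meas.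
  - by move=> x /= mx; rewrite /h mulr_gt0 // subr_gt0.
- move=> /keyB hU.
  have VsE : forall y, Vstar eps c V mu y = m * b y.
    move=> y; rewrite /Vstar hb /Hc.
    rewrite (@ae_eq_integral _ _ _ mu setT (fun x : borel T => (m * kc eps c x y)%:E)) //.
    - under eq_integral do rewrite EFinM.
      by rewrite (integralZl measurableT (ik y)) fineM //; exact: integrable_fin_num (ik y).
    - by apply/measurable_EFinP; apply: cont_meas; exact: (cont_sec (fun x y => kc eps c x y * V x)).
    - apply/measurable_EFinP; apply: cont_meas => x; apply: cvgMr; exact: cont_sec.
    - exists [set x | m < V x]; split => // x /= hx; rewrite ltNge; apply/negP => Vx.
      apply: hx => _; have -> : V x = m by apply/eqP; rewrite eq_le Vx hmin.
      by rewrite mulrC.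
  exists (fun y => - Wop eps c V mu b y); split; last by move=> y; rewrite subrr.
  split; [|split].
  - move=> y; rewrite /Wop.
    apply: (@continuousN _ R^o T (fun y => 2 / eps * (V y * b y - Vstar eps c V mu y))).
    apply: (@continuousM _ _ (fun=> 2/eps) (fun y => V y * b y - Vstar eps c V mu y)); first exact: cst_continuous.
    apply: (@continuousB _ R^o T (fun y => V y * b y) (Vstar eps c V mu)); last exact: Vsc.
    exact: (@continuousM _ _ V b _ (hV y) (bc y)).
  - move=> y; rewrite oppr_le0 /Wop VsE -mulrBl.
    apply: mulr_ge0; first exact: ltW.
    by apply: mulr_ge0; [rewrite subr_ge0|exact: bge0].
  - move=> y hs; have Vy : V y = m.
      apply/eqP; rewrite eq_le hmin andbT leNgt; apply/negP => my.
      have h := hs _ Uo my; have h2 : (0 < mu [set x | (m < V x)%R])%E := h.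
      by rewrite hU ltxx in h2.
    by rewrite /Wop VsE Vy subrr mulr0 oppr0.
Qed.
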